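(* Let $(R,\mathfrak{m})$ be a Noetherian local ring, $I$ an ideal of $R$ and $N$ an integer with $N>\mathrm{AR}(\mathfrak{m},I\subseteq R)$. Let $J$ be an ideal of $R$ such that $I+\mathfrak{m}^N=J+\mathfrak{m}^N$ and such that $R/I$ and $R/J$ have the same Hilbert function. Then $\mu(I)=\mu(J)$. Moreover, there exist a minimal set of generators $\{f_1,\ldots,f_m\}$ of $I$ and elements $\epsilon_1,\ldots,\epsilon_m\in\mathfrak{m}^N$ such that $J=(f_1+\epsilon_1,\ldots,f_m+\epsilon_m)$.
   Context: $\mu(-)$ denotes the minimal number of generators. $\mathrm{AR}(\mathfrak{m},I\subseteq R)$ is the least integer $s$ with $\mathfrak{m}^n\cap I=\mathfrak{m}^{n-s}(\mathfrak{m}^s\cap I)$ for all $n\ge s$. The Hilbert function of $R/I$ is $n\mapsto\dim_k \mathfrak{m}^n(R/I)/\mathfrak{m}^{n+1}(R/I)$ with $k=R/\mathfrak{m}$. *)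

(* Defs.v *)
From mathcomp Require Import all_boot all_order all_algebra.
Set Implicit Arguments. Unset Strict Implicit. Unset Printing Implicit Defensive.
Import GRing.Theory.
Local Open Scope ring_scope.

Section IdealDefs.
Variable R : comUnitRingType.

Definition ideq (I J : R -> Prop) : Prop := forall x, I x <-> J x.

Definition is_ideal (I : R -> Prop) : Prop :=
  [/\ I 0, (forall a b, I a -> I b -> I (a + b)) & (forall r a, I a -> I (r * a))].

Definition gen_fam (n : nat) (f : 'I_n -> R) : R -> Prop :=
  fun x => exists c : 'I_n -> R, x = \sum_(i < n) c i * f i.

Definition span (S : R -> Prop) : R -> Prop :=
  fun x => exists n (a s : 'I_n -> R),
    (forall i, S (s i)) /\ x = \sum_(i < n) a i * s i.

Definition idsum (I J : R -> Prop) : R -> Prop :=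
  fun x => exists a b, I a /\ J b /\ x = a + b.

Definition idcap (I J : R -> Prop) : R -> Prop := fun x => I x /\ J x.

Definition idmul (I J : R -> Prop) : R -> Prop :=
  span (fun x => exists a b, I a /\ J b /\ x = a * b).

Fixpoint idpow (I : R -> Prop) (n : nat) : R -> Prop :=
  match n with
  | 0 => fun _ => True
  | n'.+1 => idmul (idpow I n') I
  end.

Definition noetherian : Prop :=
  forall I, is_ideal I -> exists n (f : 'I_n -> R), ideq I (gen_fam f).

(* (R, m) is local with maximal ideal m: m is an ideal consisting exactly of
   the non-units (R is nontrivial, being a unit ring). *)
Definition local_max (m : R -> Prop) : Prop :=
  is_ideal m /\ forall x, m x <-> x \notin GRing.unit.

Definition min_num_gens (I : R -> Prop) (k : nat) : Prop :=
  (exists f : 'I_k -> R, ideq I (gen_fam f)) /\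
  forall l (g : 'I_l -> R), ideq I (gen_fam g) -> (k <= l)%N.

Definition AR_prop (m I : R -> Prop) (s : nat) : Prop :=
  forall n, (s <= n)%N ->
    ideq (idcap (idpow m n) I) (idmul (idpow m (n - s)) (idcap (idpow m s) I)).

Definition AR_number (m I : R -> Prop) (s : nat) : Prop :=
  AR_prop m I s /\ forall t, AR_prop m I t -> (s <= t)%N.

(* Hilbert function of R/I at n equals d:
   m^n(R/I)/m^(n+1)(R/I) = (m^n + I)/(m^(n+1) + I) has dimension d over
   k = R/m, i.e. it has a k-basis of d elements: classes of x_0..x_(d-1)
   in M = m^n + I which span M modulo N = m^(n+1) + I and are linearly
   independent over R/m (scalars of k lifted to R). *)
Definition hilbert_fun (m I : R -> Prop) (n d : nat) : Prop :=
  let M := idsum (idpow m n) I in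
  let N := idsum (idpow m n.+1) I in
  exists x : 'I_d -> R,
    [/\ (forall i, M (x i)),
        (forall y, M y -> exists c : 'I_d -> R, N (y - \sum_(i < d) c i * x i))
      & (forall c : 'I_d -> R, N (\sum_(i < d) c i * x i) -> forall i, m (c i))].

End IdealDefs.

(* Main.v *)
Require Import Defs.
From mathcomp Require Import all_boot all_order all_algebra ring zify.
From Stdlib Require Import Classical ClassicalEpsilon.
Set Implicit Arguments. Unset Strict Implicit. Unset Printing Implicit Defensive.
Import GRing.Theory.
Local Open Scope ring_scope.
Local Notation span := Defs.span.


Section Basics.
Variable R : comUnitRingType.
Implicit Types I J K Q S : R -> Prop.

Definition sub (I J : R -> Prop) := forall x, I x -> J x.

Lemma ideal0 I : is_ideal I -> I 0. Proof. by case. Qed.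
Lemma idealD I a b : is_ideal I -> I a -> I b -> I (a + b).
Proof. by case=> _ H _; apply: H. Qed.
Lemma idealMl I r a : is_ideal I -> I a -> I (r * a).
Proof. by case=> _ _ H; apply: H. Qed.
Lemma idealMr I r a : is_ideal I -> I a -> I (a * r).
Proof. by move=> ? ?; rewrite mulrC; apply: idealMl. Qed.
Lemma idealN I a : is_ideal I -> I a -> I (- a).
Proof. move=> ? ?; rewrite -mulN1r; exact: idealMl. Qed.
Lemma idealB I a b : is_ideal I -> I a -> I b -> I (a - b).
Proof. by move=> ???; apply: idealD => //; apply: idealN. Qed.
Lemma idealBr I a b : is_ideal I -> I (a - b) -> I b -> I a.
Proof. by move=> hI h1 h2; have := idealD hI h1 h2; rewrite subrK. Qed.
Lemma ideal_sumP I (T : Type) (r : seq T) (P : pred T) (F : T -> R) :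
  is_ideal I -> (forall i, P i -> I (F i)) -> I (\sum_(i <- r | P i) F i).
Proof. move=> hI hF; apply: (big_ind I) => //; [exact: ideal0 | move=> x y; exact: idealD]. Qed.
Lemma ideal_sum I n (F : 'I_n -> R) : is_ideal I -> (forall i, I (F i)) -> I (\sum_(i < n) F i).
Proof. by move=> hI hF; apply: ideal_sumP. Qed.

Lemma True_ideal : is_ideal (fun _ : R => True). Proof. by split. Qed.

Lemma span_ideal S : is_ideal (span S).
Proof.
split.
- exists 0%N, (fun _ => 0), (fun _ => 0); split; [by case | by rewrite big_ord0].
- move=> a b [n [x [s [hs ->]]]] [n' [x' [s' [hs' ->]]]].
  exists (n + n')%N, (fun i => match split i with inl j => x j | inr j => x' j end),
    (fun i => match split i with inl j => s j | inr j => s' j end).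
  split. by move=> i; case: (split i) => j.
  rewrite big_split_ord /=; congr (_ + _); apply: eq_bigr => i _.
  + by have E := @unsplitK n n' (inl i); rewrite /= in E; rewrite E.
  + by have E := @unsplitK n n' (inr i); rewrite /= in E; rewrite E.
- move=> r a [n [x [s [hs ->]]]]; exists n, (fun i => r * x i), s; split => //.
  by rewrite mulr_sumr; apply: eq_bigr => i _; rewrite mulrA.
Qed.

Lemma span_in S x : S x -> span S x.
Proof. by move=> h; exists 1%N, (fun _ => 1), (fun _ => x); split => //; rewrite big_ord1 mul1r. Qed.

Lemma span_min S Q : is_ideal Q -> (forall x, S x -> Q x) -> sub (span S) Q.
Proof. move=> hQ hS x [n [a [s [hs ->]]]]; apply: ideal_sum => // i; apply: idealMl => //; exact: hS. Qed.

Lemma gen_fam_ideal n (f : 'I_n -> R) : is_ideal (gen_fam f).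
Proof.
split.
- by exists (fun _ => 0); rewrite big1 // => i _; rewrite mul0r.
- move=> a b [c ->] [c' ->]; exists (fun i => c i + c' i); rewrite -big_split /=.
  by apply: eq_bigr => i _; rewrite mulrDl.
- move=> r a [c ->]; exists (fun i => r * c i); rewrite mulr_sumr.
  by apply: eq_bigr => i _; rewrite mulrA.
Qed.

Lemma gen_fam_in n (f : 'I_n -> R) i : gen_fam f (f i).
Proof.
exists (fun j => if j == i then 1 else 0).
rewrite (bigD1 i) //= eqxx mul1r big1 ?addr0 // => j /negbTE ->; by rewrite mul0r.
Qed.

Lemma gen_fam_min n (f : 'I_n -> R) Q : is_ideal Q -> (forall i, Q (f i)) -> sub (gen_fam f) Q.
Proof. move=> hQ hf x [c ->]; apply: ideal_sum => // i; exact: idealMl. Qed.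

Lemma idsum_ideal I J : is_ideal I -> is_ideal J -> is_ideal (idsum I J).
Proof.
move=> hI hJ; split.
- by exists 0, 0; rewrite addr0; split; [apply: ideal0 | split => //; apply: ideal0].
- move=> a b [a1 [a2 [h1 [h2 ->]]]] [b1 [b2 [h1' [h2' ->]]]].
  exists (a1 + b1), (a2 + b2); split; first exact: idealD.
  split; first exact: idealD. by rewrite addrACA.
- move=> r a [a1 [a2 [h1 [h2 ->]]]]; exists (r * a1), (r * a2); split; first exact: idealMl.
  split; first exact: idealMl. by rewrite mulrDr.
Qed.

Lemma idsum_l I J x : is_ideal J -> I x -> idsum I J x.
Proof. by move=> hJ h; exists x, 0; split => //; split; [apply: ideal0 | rewrite addr0]. Qed.
Lemma idsum_r I J x : is_ideal I -> J x -> idsum I J x.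
Proof. by move=> hI h; exists 0, x; split; [apply: ideal0 | split => //; rewrite add0r]. Qed.

Lemma idmul_ideal I J : is_ideal (idmul I J).
Proof. exact: span_ideal. Qed.

Lemma idmul_in I J a b : I a -> J b -> idmul I J (a * b).
Proof. by move=> ha hb; apply: span_in; exists a, b. Qed.

Lemma idpow_ideal I n : is_ideal (idpow I n).
Proof. case: n => [|n] /=; [exact: True_ideal | exact: idmul_ideal]. Qed.

Variable m : R -> Prop.
Hypothesis hm : is_ideal m.

Lemma pow_S_sub n : sub (idpow m n.+1) (idpow m n).
Proof.
apply: span_min; first exact: idpow_ideal.
move=> x [a [b [ha [hb ->]]]]; apply: idealMr => //; exact: idpow_ideal.
Qed.

Lemma pow_le n t : (n <= t)%N -> sub (idpow m t) (idpow m n).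
Proof.
elim: t => [|t IH] hnt x hx.
  by rewrite leqn0 in hnt; move/eqP: hnt => ->.
case: (leqP n t) => h; first by apply: IH => //; exact: pow_S_sub.
by have -> : n = t.+1 by apply/eqP; rewrite eqn_leq hnt h.
Qed.

Lemma pow_gen n p q : idpow m n p -> m q -> idpow m n.+1 (p * q).
Proof. exact: idmul_in. Qed.

Lemma pow_mul a b p q : idpow m a p -> idpow m b q -> idpow m (a + b) (p * q).
Proof.
elim: b q => [|b IH] q hp /=.
  by move=> _; rewrite addn0; apply: idealMr => //; exact: idpow_ideal.
move=> [n [c [s [hs ->]]]]; rewrite addnS mulr_sumr; apply: ideal_sum; first exact: idpow_ideal.
move=> i; have [u [v [hu [hv ->]]]] := hs i.
rewrite mulrCA; apply: idealMl; first exact: idpow_ideal.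
rewrite mulrA; apply: pow_gen => //; exact: IH.
Qed.

Lemma pow1 x : idpow m 1 x <-> m x.
Proof.
split.
- by apply: span_min => // y [a [b [_ [hb ->]]]]; apply: idealMl.
- by move=> h; rewrite -(mul1r x); apply: pow_gen.
Qed.

Lemma pow_m n x : (1 <= n)%N -> idpow m n x -> m x.
Proof. by move=> hn h; apply/pow1; apply: (pow_le hn). Qed.

End Basics.


Lemma min_nat (P : nat -> Prop) n : P n -> exists k, P k /\ forall l, P l -> (k <= l)%N.
Proof.
move=> hn; apply: NNPP => H.
have H' : forall k, P k -> exists l, P l /\ (l < k)%N.
  move=> k hk; apply: NNPP => H2; apply: H; exists k; split => // l hl.
  rewrite leqNgt; apply/negP => hlk; apply: H2; by exists l.
have : forall k j, (j <= k)%N -> ~ P j.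
  elim=> [|k IH] j hj hP.
    rewrite leqn0 in hj; move/eqP: hj hP => -> /H' [l [_]]; by [].
  have [l [hl hlj]] := H' _ hP; apply: (IH l) => //; rewrite -ltnS; exact: leq_trans hlj hj.
by move/(_ n n (leqnn n)).
Qed.

Lemma fin_choice (T : finType) (U : Type) (P : T -> U -> Prop) :
  (forall x, exists u, P x u) -> exists f : T -> U, forall x, P x (f x).
Proof. move=> h; exact: (@fin_all_exists T (fun _ => U) P h). Qed.

Section Local.
Variable R : comUnitRingType.
Variable m : R -> Prop.
Hypothesis noeth : noetherian R.
Hypothesis hloc : local_max m.
Implicit Types I J K Q L : R -> Prop.

Lemma hm : is_ideal m. Proof. by case: hloc. Qed.

Lemma unit_notm x : ~ m x -> x \is a GRing.unit.
Proof.
move=> h; case: (boolP (x \is a GRing.unit)) => // hx; exfalso; apply: h.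
by case: hloc => _ ->.
Qed.

Lemma notm1 : ~ m 1.
Proof. by case: hloc => _ -> ; rewrite unitr1. Qed.

Lemma unit_1sub c : m c -> (1 - c) \is a GRing.unit.
Proof.
move=> hc; apply: unit_notm => h; apply: notm1.
by have := idealD hm h hc; rewrite subrK.
Qed.

Definition Mset K p (l : 'I_p -> R) : R -> Prop :=
  fun z => exists k c, K k /\ (forall i, m (c i)) /\ z = k + \sum_(i < p) c i * l i.

Lemma Mset_ideal K p (l : 'I_p -> R) : is_ideal K -> is_ideal (Mset K l).
Proof.
move=> hK; split.
- exists 0, (fun _ => 0); split; first exact: ideal0.
  split; first by move=> i; exact: (ideal0 hm).
  by rewrite big1 ?addr0 // => i _; rewrite mul0r.
- move=> a b [k [c [hk [hc ->]]]] [k' [c' [hk' [hc' ->]]]].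
  exists (k + k'), (fun i => c i + c' i); split; first exact: idealD.
  split; first by move=> i; apply: (idealD hm).
  rewrite addrACA; congr (_ + _); rewrite -big_split /=.
  by apply: eq_bigr => i _; rewrite mulrDl.
- move=> r a [k [c [hk [hc ->]]]]; exists (r * k), (fun i => r * c i).
  split; first exact: idealMl. split; first by move=> i; apply: (idealMl _ hm).
  rewrite mulrDr mulr_sumr; congr (_ + _); apply: eq_bigr => i _; by rewrite mulrA.
Qed.

Lemma idmul_Mset K L p (l : 'I_p -> R) : is_ideal K ->
  sub L (idsum K (gen_fam l)) -> sub (idmul m L) (Mset K l).
Proof.
move=> hK hL; apply: span_min; first exact: Mset_ideal.
move=> x [a [b [ha [hb ->]]]]; have [k [g [hk [[d ->] ->]]]] := hL _ hb.
exists (a * k), (fun i => a * d i); split; first exact: idealMl.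
split; first by move=> i; apply: (idealMr _ hm).
rewrite mulrDr mulr_sumr; congr (_ + _); apply: eq_bigr => i _; by rewrite mulrA.
Qed.

Lemma nak_aux K L : is_ideal K -> is_ideal L -> sub L (idsum K (idmul m L)) ->
  forall p (l : 'I_p -> R), (forall i, L (l i)) -> sub L (idsum K (gen_fam l)) -> sub L K.
Proof.
move=> hK hL hLm; elim=> [|p IH] l hl hLl.
  move=> y /hLl [k [g [hk [[c ->] ->]]]]; by rewrite big_ord0 addr0.
set l' := fun j => l (lift ord0 j).
set T := idsum K (gen_fam l').
have hT : is_ideal T by apply: idsum_ideal => //; exact: gen_fam_ideal.
apply: (IH l') => [j|]; first exact: hl.
have hl0 : T (l ord0).
  have [k1 [w [hk1 [hw E]]]] := hLm _ (hl ord0).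
  have [k2 [c [hk2 [hc Ew]]]] := idmul_Mset hK hLl hw.
  rewrite big_ord_recl in Ew.
  set S := \sum_(j < p) _ in Ew.
  have E2 : (1 - c ord0) * l ord0 = (k1 + k2) + S.
    rewrite mulrBl mul1r {1}E Ew; ring.
  rewrite -(mulKr (unit_1sub (hc ord0)) (l ord0)) E2.
  apply: idealMl => //; apply: idealD => //; first by apply: idsum_l; [exact: gen_fam_ideal | exact: idealD].
  apply: idsum_r => //; exists (fun j => c (lift ord0 j)); by [].
have hgen : sub (gen_fam l) T.
  apply: gen_fam_min => // i; case: (unliftP ord0 i) => [j ->|->] //.
  by apply: idsum_r => //; exact: (gen_fam_in l' j).
move=> y /hLl [k [g [hk [hg ->]]]]; apply: idealD => //; first by apply: idsum_l => //; exact: gen_fam_ideal.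
exact: hgen.
Qed.

Lemma nakayama K L p (l : 'I_p -> R) : is_ideal K -> ideq L (gen_fam l) ->
  sub L (idsum K (idmul m L)) -> sub L K.
Proof.
move=> hK hLl hLm.
have hL : is_ideal L.
  have hg := gen_fam_ideal l; split.
  - by apply/hLl; exact: ideal0.
  - by move=> a b /hLl ha /hLl hb; apply/hLl; exact: idealD.
  - by move=> r a /hLl ha; apply/hLl; exact: idealMl.
apply: (nak_aux hK hL hLm (l := l)) => [i|y /hLl hy]; first by apply/hLl; exact: gen_fam_in.
by apply: idsum_r.
Qed.

Lemma chain_mono (C : nat -> R -> Prop) : (forall t y, C t y -> C t.+1 y) ->
  forall t t', (t <= t')%N -> sub (C t) (C t').
Proof.
move=> hC t t'; elim: t' => [|t' IH] h y hy.
  by rewrite leqn0 in h; move/eqP: h hy => ->.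
case: (leqP t t') => h'; first by apply: hC; exact: IH.
by have <- : t = t'.+1 by apply/eqP; rewrite eqn_leq h h'.
Qed.

Lemma acc (C : nat -> R -> Prop) : (forall t, is_ideal (C t)) -> (forall t y, C t y -> C t.+1 y) ->
  exists j, forall t y, C t y -> C j y.
Proof.
move=> hI hC.
set U := fun y => exists t, C t y.
have hU : is_ideal U.
  split.
  - by exists 0%N; exact: ideal0.
  - move=> a b [t1 h1] [t2 h2]; exists (maxn t1 t2); apply: idealD => //.
    + by apply: (chain_mono hC (leq_maxl t1 t2)).
    + by apply: (chain_mono hC (leq_maxr t1 t2)).
  - by move=> r a [t h]; exists t; apply: idealMl.
have [p [u hu]] := noeth hU.
have [T hT] : exists T : 'I_p -> nat, forall i, C (T i) (u i).
  apply: (@fin_choice _ nat (fun i t => C t (u i))) => i; by have /hu := gen_fam_in u i.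
exists (\max_i T i) => t y hy.
have /hu : U y by exists t.
apply: gen_fam_min => // i. have := chain_mono hC (@leq_bigmax _ T i) (hT i). exact.
Qed.

Lemma maximal (F : (R -> Prop) -> Prop) Q0 : (forall Q, F Q -> is_ideal Q) -> F Q0 ->
  exists Q, F Q /\ forall Q', F Q' -> sub Q Q' -> sub Q' Q.
Proof.
move=> hFI hF0; apply: NNPP => H.
have step : forall Q : {Q | F Q}, {Q' : {Q | F Q} |
    sub (sval Q) (sval Q') /\ exists y, sval Q' y /\ ~ sval Q y}.
  move=> [Q hQ]; apply: constructive_indefinite_description.
  apply: NNPP => H2; apply: H; exists Q; split => // Q' hQ' hsub y hy.
  apply: NNPP => hny; apply: H2; exists (exist _ Q' hQ'); split => //; by exists y.
pose sq := fix sq t := if t is t'.+1 then sval (step (sq t')) else exist F Q0 hF0.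
set C := fun t => sval (sq t).
have hC : forall t y, C t y -> C t.+1 y.
  by move=> t y; rewrite /C /=; case: (step (sq t)) => Q' [hs _] /=; apply: hs.
have [j hj] := acc (fun t => hFI _ (svalP (sq t))) hC.
have : exists y, C j.+1 y /\ ~ C j y.
  by rewrite /C /=; case: (step (sq j)) => Q' [_ [y hy]] /=; exists y.
by move=> [y [h1 h2]]; apply: h2; apply: (hj j.+1).
Qed.

End Local.


Section Pigeon.
Variable R : comUnitRingType.
Variables (k n : nat) (a : 'I_k -> R) (Q : R -> Prop).
Hypothesis hQ : is_ideal Q.
Hypothesis ha : forall i, Q (a i ^+ n).

Lemma pig_prod M (z : 'I_M -> R) : (k * n < M)%N -> (forall j, gen_fam a (z j)) -> Q (\prod_j z j).
Proof.
move=> hM hz.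
have [C hC] := @fin_choice _ ('I_k -> R) (fun j c => z j = \sum_(i < k) c i * a i) hz.
have -> : \prod_j z j = \prod_j \sum_(i < k) C j i * a i by apply: eq_bigr => j _; exact: hC.
rewrite bigA_distr_bigA /=; apply: ideal_sumP => // phi _.
rewrite big_split /=; apply: idealMl => //.
have hsum : (\sum_i #|[pred j | phi j == i]| = M)%N.
  transitivity (\sum_(j < M) 1)%N; last by rewrite sum_nat_const card_ord muln1.
  rewrite (partition_big phi predT) //=.
  apply: eq_bigr => i _; rewrite -sum1_card; apply: eq_bigl => j; by rewrite inE.
have [i hi] : exists i, (n <= #|[pred j | phi j == i]|)%N.
  apply: NNPP => hne.
  have hlt : forall i, (#|[pred j | phi j == i]| <= n)%N.
    move=> i; apply: ltnW; rewrite ltnNge; apply/negP => h; apply: hne; by exists i.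
  have : (M <= k * n)%N.
    rewrite -hsum; apply: (@leq_trans (\sum_(i < k) n)); first by apply: leq_sum => i _; exact: hlt.
    by rewrite sum_nat_const card_ord.
  by rewrite leqNgt hM.
rewrite (bigID (fun j => phi j == i)) /=; apply: idealMr => //.
have -> : \prod_(j | phi j == i) a (phi j) = \prod_(j in [pred j | phi j == i]) a i.
  by apply: eq_big => [j|j /eqP ->]; rewrite ?inE.
rewrite prodr_const -(subnKC hi) exprD; exact: idealMr.
Qed.

Lemma pig_pow P : is_ideal P -> (forall x, P x -> gen_fam a x) ->
  forall t u, idpow P t u -> forall M (z : 'I_M -> R), (forall j, P (z j)) ->
  (k * n < t + M)%N -> Q (u * \prod_j z j).
Proof.
move=> hP hPa; elim=> [|t IH] u hu M z hz hM.
  apply: idealMl => //; apply: pig_prod => // j; exact: hPa.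
case: hu => [l [c [s [hs ->]]]]; rewrite mulr_suml; apply: ideal_sum => // i.
have [p [v [hp [hv ->]]]] := hs i.
pose z' := fun j : 'I_M.+1 => if unlift ord0 j is Some j' then z j' else v.
have E : v * \prod_j z j = \prod_j z' j.
  rewrite big_ord_recl /z' unlift_none; congr (_ * _); apply: eq_bigr => j _; by rewrite liftK.
rewrite -mulrA -mulrA E; apply: idealMl => //; apply: IH => //.
  by move=> j; rewrite /z'; case: (unlift ord0 j).
by rewrite addnS -addSn.
Qed.

Lemma pig_sub P : is_ideal P -> (forall x, P x -> gen_fam a x) ->
  sub (idpow P (k * n).+1) Q.
Proof.
move=> hP hPa u hu.
have := @pig_pow P hP hPa _ u hu 0%N (fun _ => 1).
rewrite big_ord0 mulr1 addn0; apply => //; by case.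
Qed.
End Pigeon.

Section Krull.
Variable R : comUnitRingType.
Variable m : R -> Prop.
Hypothesis noeth : noetherian R.
Hypothesis hloc : local_max m.

Lemma krull K : is_ideal K -> forall x, (forall n, idsum K (idpow m n) x) -> K x.
Proof.
move=> hK.
have hS : forall n, is_ideal (idsum K (idpow m n)).
  by move=> n; apply: idsum_ideal => //; exact: idpow_ideal.
set L := fun x => forall n, idsum K (idpow m n) x.
have hL : is_ideal L.
  split.
  - by move=> n; apply: ideal0.
  - by move=> a b ha hb n; apply: idealD (ha n) (hb n).
  - by move=> r a ha n; apply: idealMl (ha n).
have [p [l hl]] := noeth hL.
suff hsub : sub L (idsum K (idmul m L)).
  move=> x hx; apply: (nakayama hloc hK hl hsub); exact: hx.
move=> x hx; apply: NNPP => hnx.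
set Q0 := idsum K (idmul m L).
have hQ0 : is_ideal Q0 by apply: idsum_ideal => //; exact: idmul_ideal.
pose F := fun Q => is_ideal Q /\ sub Q0 Q /\ ~ Q x.
have [Q [[hQ [hQ0Q hQx]] hmax]] :=
  @maximal _ noeth F Q0 (fun Q h => h.1) (conj hQ0 (conj (fun y h => h) hnx)).
have hpow : forall a, m a -> exists j, Q (a ^+ j).
  move=> a ha.
  have hax : Q (a * x) by apply: hQ0Q; apply: idsum_r => //; apply: idmul_in.
  pose C := fun t y => Q (a ^+ t * y).
  have hCI : forall t, is_ideal (C t).
    move=> t; split; rewrite /C.
    - by rewrite mulr0; exact: ideal0.
    - by move=> u v hu hv; rewrite mulrDr; exact: idealD.
    - by move=> r u hu; rewrite mulrCA; exact: idealMl.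
  have hCS : forall t y, C t y -> C t.+1 y.
    by move=> t y; rewrite /C exprS -mulrA => h; apply: idealMl.
  have [j hj] := acc noeth hCI hCS.
  exists j.
  set Q2 := idsum Q (gen_fam (fun _ : 'I_1 => a ^+ j)).
  have hQ2 : is_ideal Q2 by apply: idsum_ideal => //; exact: gen_fam_ideal.
  case: (classic (Q2 x)) => hx2.
  - exfalso; apply: hQx.
    have [q [g [hq [[c Eg] Ex]]]] := hx2; rewrite big_ord1 in Eg.
    have hjx : Q (a ^+ j * x) by apply: (hj 1%N); rewrite /C expr1.
    have hc : C (j + j) (c ord0).
      rewrite /C.
      have -> : a ^+ (j + j) * c ord0 = a ^+ j * x - a ^+ j * q.
        by rewrite Ex Eg exprD; ring.
      by apply: idealB => //; apply: idealMl.
    have := hj _ _ hc; rewrite /C => hc'.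
    rewrite Ex Eg; apply: idealD => //; by rewrite mulrC.
  - have hFQ2 : F Q2.
      split => //; split => // y hy; apply: idsum_l; [exact: gen_fam_ideal | exact: hQ0Q].
    apply: (hmax Q2 hFQ2 (fun y hy => idsum_l (gen_fam_ideal _) hy)).
    by apply: idsum_r => //; exact: (gen_fam_in (fun _ : 'I_1 => a ^+ j) ord0).
have [km [am ham]] := noeth (hm hloc).
have [J hJ] := @fin_choice _ nat (fun i j => Q (am i ^+ j))
  (fun i => hpow (am i) ((ham _).2 (gen_fam_in am i))).
set nn := \max_i J i.
have hQa : forall i, Q (am i ^+ nn).
  move=> i; rewrite /nn -(subnKC (@leq_bigmax _ J i)) exprD; exact: idealMr.
have hsubQ := pig_sub hQ hQa (hm hloc) (fun y hy => (ham y).1 hy).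
apply: hQx.
have [ka [w [hka [hw ->]]]] := hx (km * nn).+1.
apply: idealD => //; last exact: hsubQ.
by apply: hQ0Q; apply: idsum_l => //; exact: idmul_ideal.
Qed.
End Krull.


Lemma sum_pivot (R : comUnitRingType) d (i0 : 'I_d.+1) (F : 'I_d.+1 -> R) :
  \sum_i F i = F i0 + \sum_(j < d) F (lift i0 j).
Proof. by rewrite (bigD1_ord i0). Qed.

Section LinAlg.
Variable R : comUnitRingType.
Variable m : R -> Prop.
Hypothesis hloc : local_max m.

Definition spans (B : R -> Prop) n (x : 'I_n -> R) y :=
  exists c : 'I_n -> R, B (y - \sum_i c i * x i).
Definition indep (B : R -> Prop) n (x : 'I_n -> R) :=
  forall c : 'I_n -> R, B (\sum_i c i * x i) -> forall i, m (c i).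

Lemma drop_span B d (x : 'I_d.+1 -> R) (c : 'I_d.+1 -> R) i0 :
  is_ideal B -> B (\sum_i c i * x i) -> ~ m (c i0) ->
  forall y, spans B x y -> spans B (fun j => x (lift i0 j)) y.
Proof.
move=> hB hc hu y [e he].
have uu := unit_notm hloc hu.
set v := (c i0)^-1.
have hv : v * c i0 = 1 by rewrite /v mulVr.
exists (fun j => e (lift i0 j) - e i0 * v * c (lift i0 j)).
rewrite (sum_pivot i0) in hc; rewrite (sum_pivot i0) in he.
set S1 := \sum_(j < d) e (lift i0 j) * x (lift i0 j) in he.
set S2 := \sum_(j < d) c (lift i0 j) * x (lift i0 j) in hc.
have -> : \sum_(j < d) (e (lift i0 j) - e i0 * v * c (lift i0 j)) * x (lift i0 j)
    = S1 - e i0 * v * S2.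
  rewrite /S1 /S2 mulr_sumr -sumrB; apply: eq_bigr => j _; ring.
have -> : y - (S1 - e i0 * v * S2) = (y - (e i0 * x i0 + S1)) + (e i0 * v) * (c i0 * x i0 + S2).
  have k1 : e i0 * v * (c i0 * x i0) = e i0 * x i0.
    by rewrite mulrA -(mulrA (e i0) v) hv mulr1.
  rewrite mulrDr k1; ring.
apply: (idealD hB he); exact: (idealMl _ hB hc).
Qed.

Lemma span_le (A B : R -> Prop) : is_ideal B -> (forall c z, m c -> A z -> B (c * z)) ->
  forall e (x : 'I_e -> R) d (y : 'I_d -> R), (forall j, A (x j)) ->
  (forall i, spans B x (y i)) -> indep B y -> (d <= e)%N.
Proof.
move=> hB hAB; elim=> [|e IH] x d y hx hy hind.
  case: d y hy hind => // d y hy hind; exfalso; apply: (notm1 hloc).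
  apply: (hind (fun _ => 1) _ ord0); apply: ideal_sum => // i.
  have [c hc] := hy i; rewrite big_ord0 subr0 in hc; by rewrite mul1r.
have [C hC] := @fin_choice _ ('I_e.+1 -> R) (fun i c => B (y i - \sum_t c t * x t)) hy.
set x' := fun t => x (lift ord0 t).
case: (classic (forall i, m (C i ord0))) => hall.
  apply: leqW; apply: (IH x' d y) => [t|i|]; [exact: hx| |exact: hind].
  exists (fun t => C i (lift ord0 t)).
  have := hC i; rewrite big_ord_recl => h.
  have -> : y i - \sum_(t < e) C i (lift ord0 t) * x' t =
    (y i - (C i ord0 * x ord0 + \sum_(t < e) C i (lift ord0 t) * x (lift ord0 t))) + C i ord0 * x ord0.
    rewrite /x'; ring.
  by apply: idealD => //; apply: hAB.
have [i0 hi0] : exists i0, ~ m (C i0 ord0).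
  by apply: NNPP => H; apply: hall => i; apply: NNPP => h; apply: H; exists i.
case: d y hy hind C hC hall i0 hi0 => [|d] y hy hind C hC _ i0 hi0; first by case: (i0).
have uu := unit_notm hloc hi0.
set v := (C i0 ord0)^-1.
have hv : v * C i0 ord0 = 1 by rewrite /v mulVr.
set y' := fun j => y (lift i0 j) - C (lift i0 j) ord0 * v * y i0.
suff : (d <= e)%N by [].
apply: (IH x' d y') => [t|j|].
- exact: hx.
- exists (fun t => C (lift i0 j) (lift ord0 t) - C (lift i0 j) ord0 * v * C i0 (lift ord0 t)).
  have h1 := hC (lift i0 j); have h2 := hC i0.
  rewrite big_ord_recl in h1; rewrite big_ord_recl in h2.
  set T1 := \sum_(t < e) C (lift i0 j) (lift ord0 t) * x (lift ord0 t) in h1.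
  set T2 := \sum_(t < e) C i0 (lift ord0 t) * x (lift ord0 t) in h2.
  have -> : \sum_(t < e) (C (lift i0 j) (lift ord0 t) - C (lift i0 j) ord0 * v * C i0 (lift ord0 t)) * x' t
     = T1 - C (lift i0 j) ord0 * v * T2.
    rewrite /T1 /T2 /x' mulr_sumr -sumrB; apply: eq_bigr => t _; ring.
  have -> : y' j - (T1 - C (lift i0 j) ord0 * v * T2) =
     (y (lift i0 j) - (C (lift i0 j) ord0 * x ord0 + T1))
     - (C (lift i0 j) ord0 * v) * (y i0 - (C i0 ord0 * x ord0 + T2)).
    have k1 : C (lift i0 j) ord0 * v * (C i0 ord0 * x ord0) = C (lift i0 j) ord0 * x ord0.
      by rewrite mulrA -(mulrA (C (lift i0 j) ord0) v) hv mulr1.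
    rewrite /y' [in RHS]mulrBr [in RHS]mulrDr k1; ring.
  by apply: idealB => //; apply: idealMl.
- move=> c hc j.
  pose ct := fun i => if unlift i0 i is Some j then c j
                      else - \sum_(j < d) c j * (C (lift i0 j) ord0 * v).
  have E : \sum_i ct i * y i = \sum_(j < d) c j * y' j.
    have hct : forall k, ct (lift i0 k) = c k by move=> k; rewrite /ct liftK.
    rewrite (sum_pivot i0) (eq_bigr (fun k => c k * y (lift i0 k))); last by move=> k _; rewrite hct.
    rewrite /ct unlift_none.
    rewrite /y'.
    have -> : \sum_(j < d) c j * (y (lift i0 j) - C (lift i0 j) ord0 * v * y i0) =
       \sum_(j < d) c j * y (lift i0 j) - (\sum_(j < d) c j * (C (lift i0 j) ord0 * v)) * y i0.
      rewrite mulr_suml -sumrB; apply: eq_bigr => k _; ring.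
    ring.
  have := hind ct; rewrite E => /(_ hc (lift i0 j)).
  by rewrite /ct liftK.
Qed.

Lemma basis_exists (A B : R -> Prop) : is_ideal A -> is_ideal B ->
  (exists p (a : 'I_p -> R), ideq A (gen_fam a)) ->
  exists d (x : 'I_d -> R), [/\ (forall i, A (x i)), (forall y, A y -> spans B x y) & indep B x].
Proof.
move=> hA hB [p [a ha]].
pose P := fun d => exists x : 'I_d -> R, (forall i, A (x i)) /\ (forall y, A y -> spans B x y).
have hP : P p.
  exists a; split; first by move=> i; apply/ha; exact: gen_fam_in.
  move=> y /ha [c ->]; exists c; rewrite subrr; exact: ideal0.
have [d [[x [hx hsp]] hmin]] := min_nat hP.
exists d, x; split => // c hc i; apply: NNPP => hi.
case: d x hx hsp hmin c hc i hi => [|d] x hx hsp hmin c hc i hi; first by case: (i).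
have : P d.
  exists (fun j => x (lift i j)); split; first by move=> j; exact: hx.
  move=> y hy; apply: (drop_span hB hc hi); exact: hsp.
by move/hmin; rewrite ltnn.
Qed.

Lemma span_indep (A B : R -> Prop) : is_ideal B -> (forall c z, m c -> A z -> B (c * z)) ->
  forall d (x y : 'I_d -> R), (forall j, A (x j)) -> (forall w, A w -> spans B x w) ->
  (forall i, A (y i)) -> indep B y -> indep B x.
Proof.
move=> hB hAB d x y hxA hxs hyA hyi c hc i; apply: NNPP => hi.
case: d x y hxA hxs hyA hyi c hc i hi => [|d] x y hxA hxs hyA hyi c hc i hi; first by case: (i).
have hsp : forall j, spans B (fun j => x (lift i j)) (y j).
  by move=> j; apply: (drop_span hB hc hi); exact: hxs.
have := @span_le A B hB hAB d (fun j => x (lift i j)) d.+1 y (fun j => hxA _) hsp hyi.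
by rewrite ltnn.
Qed.

End LinAlg.


Section Main.
Variable R : comUnitRingType.
Variable m : R -> Prop.
Hypothesis noeth : noetherian R.
Hypothesis hloc : local_max m.

Lemma mAB K n c z : is_ideal K -> m c -> idsum (idpow m n) K z -> idsum (idpow m n.+1) K (c * z).
Proof.
move=> hK hc [p [i [hp [hi ->]]]]; exists (c * p), (c * i); split.
  by rewrite mulrC; apply: pow_gen.
by split; [exact: idealMl | rewrite mulrDr].
Qed.

Lemma in_compare (I J : R -> Prop) n : is_ideal I -> is_ideal J ->
  (forall z, I z -> idpow m n z -> idsum (idpow m n.+1) J z) ->
  (forall d, hilbert_fun m I n d -> hilbert_fun m J n d) ->
  forall z, J z -> idpow m n z -> idsum (idpow m n.+1) I z.
Proof.
move=> hI hJ H1 HF.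
have hm := hm hloc.
set AI := idsum (idpow m n) I; set BI := idsum (idpow m n.+1) I.
set AJ := idsum (idpow m n) J; set BJ := idsum (idpow m n.+1) J.
have hAI : is_ideal AI by apply: idsum_ideal => //; exact: idpow_ideal.
have hBI : is_ideal BI by apply: idsum_ideal => //; exact: idpow_ideal.
have hAJ : is_ideal AJ by apply: idsum_ideal => //; exact: idpow_ideal.
have hBJ : is_ideal BJ by apply: idsum_ideal => //; exact: idpow_ideal.
have hpn := idpow_ideal m n.
have hpn1 := idpow_ideal m n.+1.
have K1 : forall w, idpow m n w -> BI w -> BJ w.
  move=> w hw [v [i [hv [hi E]]]].
  have hi' : idpow m n i.
    have -> : i = w - v by rewrite E addrC addKr.
    apply: idealB => //; exact: pow_S_sub.
  have [v' [j [hv' [hj Ei]]]] := H1 i hi hi'.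
  exists (v + v'), j; split; first exact: idealD.
  by split => //; rewrite E Ei addrA.
have [d [x [hxA hxs hxi]]] := basis_exists hloc hAI hBI (noeth hAI).
have HI : hilbert_fun m I n d by exists x; split.
have [y [hyA hys hyi]] := HF d HI.
have [u hu] : exists u : 'I_d -> R, forall i, idpow m n (u i) /\ I (x i - u i).
  apply: (@fin_choice _ R (fun i u => idpow m n u /\ I (x i - u))) => i.
  have [p [q [hp [hq E]]]] := hxA i.
  by exists p; split => //; rewrite E addrC addKr.
have huI : forall w, AI w -> spans BI u w.
  move=> w hw; have [c hc] := hxs w hw; exists c.
  have -> : w - \sum_i c i * u i = (w - \sum_i c i * x i) + \sum_i c i * (x i - u i).
    have E : \sum_i c i * (x i - u i) = \sum_i c i * x i - \sum_i c i * u i.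
      by rewrite -sumrB; apply: eq_bigr => i _; rewrite mulrBr.
    rewrite E; ring.
  apply: idealD => //; apply: ideal_sum => // i; apply: idealMl => //.
  apply: idsum_r => //; exact: (hu i).2.
have hun : forall c : 'I_d -> R, idpow m n (\sum_i c i * u i).
  by move=> c; apply: ideal_sum => // i; apply: idealMl => //; exact: (hu i).1.
have huJ : forall w, AJ w -> spans BJ u w.
  move=> w [p [j [hp [hj ->]]]].
  have [c hc] := huI p (idsum_l hI hp); exists c.
  have -> : p + j - \sum_i c i * u i = (p - \sum_i c i * u i) + j by ring.
  apply: idealD => //; last by apply: idsum_r.
  by apply: K1 => //; apply: idealB.
have hui : indep m BJ u.
  apply: (@span_indep R m hloc AJ BJ hBJ _ d u y) => //.
  - by move=> c z hc hz; apply: mAB.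
  - by move=> j; apply: idsum_l => //; exact: (hu j).1.
move=> z hz hzn.
have [c hc] := huI z (idsum_l hI hzn).
have h1 : BJ (z - \sum_i c i * u i) by apply: K1 => //; apply: idealB.
have h2 : BJ (\sum_i c i * u i).
  have -> : \sum_i c i * u i = z - (z - \sum_i c i * u i) by ring.
  by apply: idealB => //; apply: idsum_r.
have hcm := hui c h2.
have -> : z = (z - \sum_i c i * u i) + \sum_i c i * u i by ring.
apply: idealD => //; apply: ideal_sum => // i; apply: idsum_l => //.
by rewrite mulrC; apply: pow_gen => //; exact: (hu i).1.
Qed.

Lemma gens_indep (I : R -> Prop) k (f : 'I_k -> R) : is_ideal I -> ideq I (gen_fam f) ->
  (forall l (h : 'I_l -> R), ideq I (gen_fam h) -> (k <= l)%N) -> indep m (idmul m I) f.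
Proof.
move=> hI hf hmin c hc i; apply: NNPP => hi.
case: k f hf hmin c hc i hi => [|k] f hf hmin c hc i hi; first by case: (i).
set K := gen_fam (fun j => f (lift i j)).
have hK : is_ideal K by exact: gen_fam_ideal.
have hsub : sub I (idsum K (idmul m I)).
  move=> z hz.
  have hs : spans (idmul m I) f z.
    have [e ->] := (hf z).1 hz; exists e; rewrite subrr; exact: ideal0 (idmul_ideal _ _).
  have [e he] := drop_span hloc (idmul_ideal _ _) hc hi hs.
  exists (\sum_j e j * f (lift i j)), (z - \sum_j e j * f (lift i j)); split; first by exists e.
  by split => //; rewrite addrC subrK.
have hIK := nakayama hloc hK hf hsub.
have : ideq I K.
  move=> z; split; first exact: hIK.
  apply: gen_fam_min => // j; apply/hf; exact: gen_fam_in.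
by move/hmin; rewrite ltnn.
Qed.

End Main.

Theorem proposition3p5 (R : comUnitRingType) (m I J : R -> Prop) (N : nat) :
  noetherian R -> local_max m ->
  is_ideal I -> is_ideal J ->
  (exists s, AR_number m I s /\ (s < N)%N) ->
  ideq (idsum I (idpow m N)) (idsum J (idpow m N)) ->
  (forall n d, hilbert_fun m I n d <-> hilbert_fun m J n d) ->
  (exists k, min_num_gens I k /\ min_num_gens J k) /\
  (exists k (f eps : 'I_k -> R),
     [/\ min_num_gens I k, ideq I (gen_fam f),
         (forall i, idpow m N (eps i))
       & ideq J (gen_fam (fun i => f i + eps i))]).
Proof.
move=> noeth hloc hI hJ [s [[hAR _] hsN]] hIJ hHF.
have hm := hm hloc.
have [p0 [f0 hf0]] := noeth _ hI.
have [k [[f hf] hkmin]] :=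
  @min_nat (fun k => exists f : 'I_k -> R, ideq I (gen_fam f)) p0 (ex_intro _ f0 hf0).
have hminI : min_num_gens I k.
  by split; [exists f | move=> l g hg; apply: hkmin; exists g].
have [eps heps] : exists eps : 'I_k -> R, forall i, idpow m N (eps i) /\ J (f i + eps i).
  apply: (@fin_choice _ R (fun i e => idpow m N e /\ J (f i + e))) => i.
  have hfi : I (f i) by apply/hf; exact: gen_fam_in.
  have [j [e [hj [he E]]]] := (hIJ (f i)).1 (idsum_l (idpow_ideal m N) hfi).
  exists (- e); split; first by apply: idealN => //; exact: idpow_ideal.
  by rewrite E addrK.
set g := fun i => f i + eps i.
set J' := gen_fam g.
have hJ' : is_ideal J' by exact: gen_fam_ideal.
have hJ'J : sub J' J by apply: gen_fam_min => // i; exact: (heps i).2.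
have hG : forall t p q, idpow m t p -> I q -> idsum J' (idpow m (t + N)) (p * q).
  move=> t p q hp /((hf q).1) [b ->].
  exists (\sum_i (p * b i) * g i), (- \sum_i (p * b i) * eps i); split.
    by exists (fun i => p * b i).
  split.
    apply: idealN; first exact: idpow_ideal.
    apply: ideal_sum; first exact: idpow_ideal.
    by move=> i; apply: pow_mul => //; [apply: idealMr => //; exact: idpow_ideal | exact: (heps i).1].
  have -> : \sum_i p * b i * g i = \sum_i p * b i * f i + \sum_i p * b i * eps i.
    by rewrite -big_split /=; apply: eq_bigr => i _; rewrite /g mulrDr.
  have -> : p * \sum_i b i * f i = \sum_i p * b i * f i.
    by rewrite mulr_sumr; apply: eq_bigr => i _; rewrite mulrA.
  ring.
have hmono : forall K (P P' : R -> Prop) z, sub P P' -> idsum K P z -> idsum K P' z.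
  by move=> K P P' z hPP [a [b [ha [hb ->]]]]; exists a, b; split => //; split => //; apply: hPP.
have hB : forall n z, I z -> idpow m n z -> idsum J' (idpow m n.+1) z.
  move=> n z hz hzn; case: (ltnP n N) => hn.
    apply: (hmono _ (idpow m (0 + N))); first by apply: pow_le.
    by rewrite -(mul1r z); apply: hG.
  have hsn : (s <= n)%N by apply: leq_trans hn; exact: ltnW.
  have := (hAR n hsn z).1 (conj hzn hz).
  apply: span_min; first by apply: idsum_ideal => //; exact: idpow_ideal.
  move=> w [p [q [hp [[_ hq] ->]]]].
  apply: (hmono _ (idpow m (n - s + N))); last exact: hG.
  by apply: pow_le => //; lia.
have hC : forall n z, J z -> idpow m n z -> idsum (idpow m n.+1) I z.
  move=> n; apply: in_compare => //.
  - move=> z hz hzn; have [a [b [ha [hb ->]]]] := hB n z hz hzn.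
    exists b, a; split => //; split; [exact: hJ'J | by rewrite addrC].
  - by move=> d; apply: (hHF n d).1.
have hD : forall n z, J z -> idsum J' (idpow m n) z.
  elim=> [|n IH] z hz.
    by exists 0, z; split; [exact: ideal0 | split => //; rewrite add0r].
  have [a [b [ha [hb E]]]] := IH z hz.
  have hbJ : J b.
    have -> : b = z - a by rewrite E addrC addKr.
    by apply: idealB => //; exact: hJ'J.
  have [v [i [hv [hi Eb]]]] := hC n b hbJ hb.
  have hin : idpow m n i.
    have -> : i = b - v by rewrite Eb addrC addKr.
    apply: idealB; [exact: idpow_ideal | exact: hb | exact: pow_S_sub].
  have [a' [v' [ha' [hv' Ei]]]] := hB n i hi hin.
  exists (a + a'), (v + v'); split; first exact: idealD.
  split; first by apply: idealD => //; exact: idpow_ideal.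
  rewrite E Eb Ei; ring.
have hJJ' : sub J J'.
  move=> z hz; apply: (krull noeth hloc hJ') => n; exact: hD.
have hJeq : ideq J (gen_fam g) by move=> z; split; [exact: hJJ' | exact: hJ'J].
have hfi : indep m (idmul m I) f by apply: gens_indep => // l h hh; apply: hkmin; exists h.
have hgi : indep m (idmul m J) g.
  move=> c hc.
  pose K0 := fun x : R => x = 0.
  have hK0 : is_ideal K0.
    split; rewrite /K0 //; first by move=> a b -> ->; rewrite addr0.
    by move=> r a ->; rewrite mulr0.
  have hJK : sub J (idsum K0 (gen_fam g)).
    by move=> z hz; exists 0, z; split => //; split; [exact: hJJ' | rewrite add0r].
  have [ka [d [hka [hd Ec]]]] := idmul_Mset hloc hK0 hJK hc.
  rewrite /K0 in hka; rewrite hka add0r in Ec.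
  set a := fun i => c i - d i.
  have Ea : \sum_i a i * f i = - \sum_i a i * eps i.
    apply/eqP; rewrite -subr_eq0 opprK.
    have -> : \sum_i a i * f i + \sum_i a i * eps i = \sum_i c i * g i - \sum_i d i * g i.
      rewrite -!sumrB -big_split /=; apply: eq_bigr => i _; rewrite /a /g; ring.
    by rewrite Ec subrr.
  have hw : idcap (idpow m N) I (\sum_i a i * f i).
    split.
      rewrite Ea; apply: idealN; first exact: idpow_ideal.
      apply: ideal_sum; first exact: idpow_ideal.
      by move=> i; apply: idealMl; [exact: idpow_ideal | exact: (heps i).1].
    by apply/hf; exists a.
  have hsN' : (s <= N)%N by exact: ltnW.
  have hw' := (hAR N hsN' _).1 hw.
  have hmI : idmul m I (\sum_i a i * f i).
    move: hw'; apply: span_min; first exact: idmul_ideal.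
    move=> w [p [q [hp [[_ hq] ->]]]]; apply: idmul_in => //.
    by apply: (pow_m hm (n := (N - s)%N)) => //; rewrite subn_gt0.
  move=> i; have := hfi a hmI i; rewrite /a => hai.
  have -> : c i = (c i - d i) + d i by rewrite subrK.
  exact: idealD.
have hminJ : min_num_gens J k.
  split; first by exists g.
  move=> l h hh.
  apply: (@span_le R m hloc J (idmul m J) (idmul_ideal _ _) _ l h k g) => //.
  - by move=> c z hc hz; apply: idmul_in.
  - by move=> j; apply/hh; exact: gen_fam_in.
  - move=> i; have /hh [e ->] : J (g i) by apply/hJeq; exact: gen_fam_in.
    by exists e; rewrite subrr; exact: ideal0 (idmul_ideal _ _).
split; first by exists k.
by exists k, f, eps; split => // i; exact: (heps i).1.
Qed.
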